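(* An $\widehat{\mathrm{FI}}$-module $M$ is an $\mathrm{FI}$-module (i.e. $M$ factors through the functor $\widehat{\mathrm{FI}}\to\mathrm{FI}$) if and only if, for all $n$, the element $(e,2)_n\in\widehat{\mathrm S}_n=\widehat{\mathrm{FI}}(n,n)$ acts trivially on $M_n$.
   Context: $\widehat{\mathrm S}_n=\{(\sigma,d)\in\mathrm S_n\times\mathbb Z: d\text{ odd}\iff\operatorname{sgn}\sigma=-1\}$ for $n\ge2$, trivial for $n=0,1$ (for $n\le1$ the element $(e,2)_n$ is the identity); $(e,2)_n$ is the element $(\mathrm{id},2)$. $\widehat{\mathrm{FI}}$: objects $n\in\mathbb N$, $\widehat{\mathrm{FI}}(n,m)=\widehat{\mathrm S}_m/i_2(\widehat{\mathrm S}_{m-n})$ ($i_1,i_2$ inclusions on first/last letters), composition $([s],[t])\mapsto[t\,i_1(s)]$. $\mathrm{FI}$ is the category of sets $[n]$ and injections, $\mathrm{FI}(n,m)=\mathrm S_m/\mathrm S_{m-n}$, and projection $\widehat{\mathrm S}_m\to\mathrm S_m$ induces a functor $\widehat{\mathrm{FI}}\to\mathrm{FI}$. Modules are functors to abelian groups. *)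

(* Defs.v *)
From mathcomp Require Import all_boot all_order all_algebra all_fingroup.
Unset Printing Implicit Defensive.
Import GRing.Theory.
Local Open Scope ring_scope.

(* The groups  Ŝ_m.  Elements are represented by raw pairs            *)
(* (sigma, d) : 'S_m * int, and validity is the predicate hatS_pred.  *)
Definition hatS_pred (m : nat) (p : 'S_m * int) : bool :=
  if (m <= 1)%N then (p.1 == 1%g) && (p.2 == 0)
  else odd `|p.2|%N == odd_perm p.1.

(* Group law.  [hmul t s] is the product "t s", i.e. the permutation    *)
(* part acts as x |-> t (s x).  (MathComp's perm product (s * t) is      *)
(* "first s then t".)                                                  *)
Definition hmul (m : nat) (t s : 'S_m * int) : 'S_m * int :=
  ((s.1 * t.1)%g, t.2 + s.2).

Definition hunit (m : nat) : 'S_m * int := (1%g, 0).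

Definition e2 (n : nat) : 'S_n * int :=
  if (n <= 1)%N then hunit n else (1%g, 2%:Z).

(* Extension of a permutation of [k] to [m] (k <= m), acting on the    *)
(* first k letters, resp. on the last k letters.                        *)
Definition ext1_fun (k m : nat) (s : 'S_k) (i : 'I_m) : 'I_m :=
  match @insub nat (fun j => (j < k)%N) 'I_k (val i) with
  | Some j => insubd i (val (s j))
  | None => i
  end.

Definition ext2_fun (k m : nat) (s : 'S_k) (i : 'I_m) : 'I_m :=
  match @insub nat (fun j => (j < k)%N) 'I_k (val i - (m - k))%N with
  | Some j => if (m - k <= val i)%N then insubd i ((m - k) + val (s j))%N else i
  | None => i
  end.

Definition ext1 (k m : nat) (s : 'S_k) : 'S_m :=
  insubd (1%g : 'S_m) [ffun i => ext1_fun k m s i].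
Definition ext2 (k m : nat) (s : 'S_k) : 'S_m :=
  insubd (1%g : 'S_m) [ffun i => ext2_fun k m s i].

Definition i1 (k m : nat) (s : 'S_k * int) : 'S_m * int :=
  if (k <= 1)%N then hunit m else (ext1 k m s.1, s.2).
Definition i2 (k m : nat) (s : 'S_k * int) : 'S_m * int :=
  if (k <= 1)%N then hunit m else (ext2 k m s.1, s.2).

(* FÎ-modules.  A morphism n -> m (n <= m) of FÎ is a left coset       *)
(* s i_2(Ŝ_{m-n}) with s in Ŝ_m; composition ([s],[t]) |-> [t i_1(s)].  *)
(* A functor FÎ -> Ab is given by abelian groups M n and, for every     *)
(* representative s in Ŝ_m, an additive map act n m s : M n -> M m,     *)
(* depending only on the coset of s, and satisfying the functor laws.   *)
Definition is_FIhat_module (M : nat -> zmodType)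
    (act : forall n m : nat, 'S_m * int -> M n -> M m) : Prop :=
  [/\
      (forall n m s, (n <= m)%N -> hatS_pred m s ->
         forall x y, act n m s (x + y) = act n m s x + act n m s y),
      (forall n m s h, (n <= m)%N -> hatS_pred m s -> hatS_pred (m - n) h ->
         act n m (hmul m s (i2 (m - n) m h)) =1 act n m s),
      (forall n, act n n (hunit n) =1 id) &
      (forall n m l s t, (n <= m)%N -> (m <= l)%N ->
         hatS_pred m s -> hatS_pred l t ->
         forall x, act m l t (act n m s x) = act n l (hmul l t (i1 m l s)) x)].

(* FI: morphisms n -> m are injections 'I_n -> 'I_m.                    *)
Definition ffun_id (n : nat) : {ffun 'I_n -> 'I_n} := [ffun i => i].
Definition ffun_comp (n m l : nat) (g : {ffun 'I_m -> 'I_l})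
  (f : {ffun 'I_n -> 'I_m}) : {ffun 'I_n -> 'I_l} := [ffun i => g (f i)].

Definition is_FI_module (N : nat -> zmodType)
    (nact : forall n m : nat, {ffun 'I_n -> 'I_m} -> N n -> N m) : Prop :=
  [/\ (forall n m (f : {ffun 'I_n -> 'I_m}), injective f ->
         forall x y, nact n m f (x + y) = nact n m f x + nact n m f y),
      (forall n, nact n n (ffun_id n) =1 id) &
      (forall n m l (f : {ffun 'I_n -> 'I_m}) (g : {ffun 'I_m -> 'I_l}),
         injective f -> injective g ->
         forall x, nact m l g (nact n m f x) = nact n l (ffun_comp n m l g f) x)].

(* The functor FÎ -> FI on morphisms: [(sigma, d)] |-> sigma restricted *)
(* to the first n letters.                                              *)
Definition proj (n m : nat) (le : (n <= m)%N) (s : 'S_m * int)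
  : {ffun 'I_n -> 'I_m} := [ffun i => s.1 (widen_ord le i)].

Definition factors_through_FI (M : nat -> zmodType)
    (act : forall n m : nat, 'S_m * int -> M n -> M m) : Prop :=
  exists nact : forall n m : nat, {ffun 'I_n -> 'I_m} -> M n -> M m,
    is_FI_module M nact /\
    (forall n m (le : (n <= m)%N) s, hatS_pred m s ->
       act n m s =1 nact n m (proj n m le s)).

(* Main.v *)
Require Import Defs.
From mathcomp Require Import all_boot all_order all_algebra all_fingroup zify.
Import GRing.Theory.
Set Implicit Arguments. Unset Strict Implicit.

Lemma oddabsD (a b : int) : odd `|(a + b)%R|%N = odd `|a|%N (+) odd `|b|%N.
Proof.
have H : forall n : nat, odd n = (n %% 2 == 1)%N.
  by move=> n; rewrite modn2; case: (odd n).
rewrite !H.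
case: (`|a| %% 2 == 1)%N / eqP => Ha; case: (`|b| %% 2 == 1)%N / eqP => Hb /=; apply/eqP; lia.
Qed.

Definition is_ext (o k m : nat) (s : 'S_k) (E : 'S_m) : Prop :=
 (forall (i : 'I_m) (j : 'I_k), val i = (o + val j)%N -> val (E i) = (o + val (s j))%N) /\
 (forall i : 'I_m, ~~ ((o <= i) && (i - o < k))%N -> E i = i).

Lemma is_ext_uniq o k m (s : 'S_k) (E E' : 'S_m) :
  is_ext o s E -> is_ext o s E' -> E = E'.
Proof.
move=> [A1 A2] [B1 B2]; apply/permP => i.
case h: ((o <= i) && (i - o < k))%N.
  move/andP: h => [h1 h2].
  have e : val i = (o + val (Ordinal h2))%N by rewrite /= subnKC.
  by apply: val_inj; rewrite (A1 _ _ e) (B1 _ _ e).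
by rewrite A2 ?h // B2 ?h.
Qed.

Lemma is_ext_mul o k m (a b : 'S_k) (A B : 'S_m) :
  is_ext o a A -> is_ext o b B -> is_ext o (a * b)%g (A * B)%g.
Proof.
move=> [A1 A2] [B1 B2]; split.
  move=> i j e; rewrite !permM.
  by apply: B1; apply: A1.
by move=> i h; rewrite permM A2 // B2.
Qed.

Lemma is_ext_one o k m : is_ext o (1%g : 'S_k) (1%g : 'S_m).
Proof. by split => [i j e|i _]; rewrite !perm1. Qed.

Lemma is_ext_tperm o k m (x y : 'I_k) (X Y : 'I_m) :
  val X = (o + x)%N -> val Y = (o + y)%N -> is_ext o (tperm x y) (tperm X Y).
Proof.
move=> hX hY; split.
  move=> i j e.
  have eX : (i == X) = (j == x) by rewrite -!val_eqE /= e hX eqn_add2l.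
  have eY : (i == Y) = (j == y) by rewrite -!val_eqE /= e hY eqn_add2l.
  case: tpermP => [/eqP|/eqP|/eqP nx /eqP ny]; rewrite ?eX ?eY.
  - by move=> /eqP ->; rewrite tpermL.
  - by move=> /eqP ->; rewrite tpermR.
  - by rewrite tpermD // eq_sym -?eX -?eY.
move=> i h; apply: tpermD.
  apply/eqP => e; move: h; rewrite -e hX; apply/negP/negPn.
  by rewrite leq_addr /= addKn ltn_ord.
apply/eqP => e; move: h; rewrite -e hY; apply/negP/negPn.
by rewrite leq_addr /= addKn ltn_ord.
Qed.

Lemma is_ext_exists o k m (hk : (o + k <= m)%N) (s : 'S_k) :
  exists2 E : 'S_m, is_ext o s E & odd_perm E = odd_perm s.
Proof.
have sh_lt (j : 'I_k) : (o + j < m)%N by apply: leq_trans hk; rewrite ltn_add2l.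
pose sh j := Ordinal (sh_lt j).
case: (prod_tpermP s) => ts -> _.
exists (\prod_(t <- ts) tperm (sh t.1) (sh t.2))%g.
  elim: ts => [|t ts IH]; first by rewrite !big_nil; apply: is_ext_one.
  by rewrite !big_cons; apply: is_ext_mul => //; apply: is_ext_tperm.
elim: ts => [|t ts IH]; first by rewrite !big_nil !odd_perm1.
rewrite !big_cons !odd_permM IH !odd_tperm; congr (_ (+) _).
by rewrite -val_eqE /= eqn_add2l.
Qed.

Lemma is_ext_odd o k m (s : 'S_k) (E : 'S_m) :
  (o + k <= m)%N -> is_ext o s E -> odd_perm E = odd_perm s.
Proof.
move=> hk h; case: (is_ext_exists hk s) => E' h' <-.
by rewrite (is_ext_uniq h h').
Qed.

Lemma ext1_is_ext k m (s : 'S_k) : (k <= m)%N -> is_ext 0 s (ext1 k m s).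
Proof.
move=> hk; case: (@is_ext_exists 0 k m hk s) => E [E1 E2] _.
suff -> : ext1 k m s = E by [].
rewrite /ext1.
have -> : [ffun i => ext1_fun k m s i] = pval E.
  apply/ffunP => i; rewrite ffunE pvalE /ext1_fun.
  case: insubP => [j Hj Hv|Hn].
    apply: val_inj; rewrite insubdK; last exact: leq_trans (ltn_ord _) hk.
    by rewrite (E1 i j) // Hv.
  by rewrite E2 //; apply/negP => /andP [_ h]; apply: (negP Hn); rewrite subn0 in h.
by rewrite valKd.
Qed.

Lemma ext2_is_ext k m (s : 'S_k) : (k <= m)%N -> is_ext (m - k) s (ext2 k m s).
Proof.
move=> hk; have hk' : (m - k + k <= m)%N by rewrite subnK.
case: (@is_ext_exists (m - k) k m hk' s) => E [E1 E2] _.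
suff -> : ext2 k m s = E by [].
rewrite /ext2.
have -> : [ffun i => ext2_fun k m s i] = pval E.
  apply/ffunP => i; rewrite ffunE pvalE /ext2_fun.
  case: insubP => [j Hj Hv|Hn].
    case: ifP => h.
      have lt : (m - k + s j < m)%N by have := ltn_ord (s j); lia.
      apply: val_inj; rewrite insubdK; last exact: lt.
      by rewrite (E1 i j) // Hv subnKC.
    by rewrite E2 // h.
  by rewrite E2 // (negbTE Hn) andbF.
by rewrite valKd.
Qed.

Lemma perm_lift_inj n m (le : (n <= m)%N) (f : {ffun 'I_n -> 'I_m}) :
  injective f -> exists p : 'S_m, forall i, p (widen_ord le i) = f i.
Proof.
move=> finj.
pose s := codom f ++ [seq x <- enum 'I_m | x \notin codom f].
have us : uniq s.
  rewrite cat_uniq; apply/and3P; split.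
  - by rewrite codomE map_inj_uniq // enum_uniq.
  - by apply/hasPn => x; rewrite mem_filter => /andP [].
  - by rewrite filter_uniq // enum_uniq.
have ps : perm_eq s (ord_tuple m).
  apply: uniq_perm => //; first by rewrite /= enum_uniq.
  by move=> x; rewrite mem_cat mem_filter mem_enum andbT orbN.
case/tuple_permP: ps => p hp; exists p => i.
have e1 : nth (f i) s i = f i.
  rewrite nth_cat size_codom card_ord ltn_ord codomE.
  by rewrite (nth_map i) ?size_enum_ord ?ltn_ord // fintype.nth_ord_enum.
have e2 : nth (f i) s (widen_ord le i) = p (widen_ord le i).
  rewrite hp /= (nth_map (widen_ord le i)) -?enumT ?size_enum_ord //=; last first.
    exact: leq_trans (ltn_ord i) le.
  rewrite tnth_ord_tuple; congr (p _); apply: val_inj => /=.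
  by rewrite fintype.nth_enum_ord // (leq_trans (ltn_ord i) le).
by rewrite -e2; exact: e1.
Qed.

Lemma small_perm m (p : 'S_m) : (m <= 1)%N -> p = 1%g.
Proof.
move=> hm; apply/permP => i; apply: val_inj; rewrite perm1.
have := ltn_ord (p i); have := ltn_ord i; rewrite /=; lia.
Qed.

Lemma valid_canon m (p : 'S_m) : hatS_pred m (p, Posz (odd_perm p)).
Proof.
rewrite /hatS_pred; case: ifP => h /=.
  by rewrite (small_perm p h) odd_perm1 eqxx.
by case: (odd_perm p).
Qed.

Lemma restr_ext n m (le : (n <= m)%N) (r : 'S_m) :
  (forall i : 'I_m, (i < n)%N -> r i = i) -> exists t : 'S_(m - n), is_ext n t r.
Proof.
move=> hr.
have ge (y : 'I_m) : (n <= y)%N -> (n <= r y)%N.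
  move=> hy; rewrite leqNgt; apply/negP => hl.
  have := hr _ hl => /perm_inj e.
  by move: hl; rewrite e ltnNge hy.
have ylt (j : 'I_(m - n)) : (n + j < m)%N by have := ltn_ord j; lia.
pose y j := Ordinal (ylt j).
have flt (j : 'I_(m - n)) : (r (y j) - n < m - n)%N.
  have := ge (y j) (leq_addr _ _); have := ltn_ord (r (y j)); lia.
pose f j := Ordinal (flt j).
have finj : injective f.
  move=> j1 j2 /(congr1 val) /= e.
  have g1 := ge (y j1) (leq_addr _ _); have g2 := ge (y j2) (leq_addr _ _).
  have : r (y j1) = r (y j2).
    apply: ord_inj; move: e g1 g2; rewrite /=; lia.
  move/perm_inj/(congr1 val) => /= e'; apply: ord_inj; lia.
exists (perm finj); split.
  move=> i j e; rewrite permE /=.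
  have -> : i = y j by apply: val_inj.
  have := ge (y j) (leq_addr _ _); lia.
move=> i hi; apply: hr; move: hi; have := ltn_ord i.
case: (leqP n i) => //= h1 h2; rewrite (_ : (i - n < m - n)%N = true) //; apply/idP; lia.
Qed.

Lemma is_ext_self m (s : 'S_m) : is_ext 0 s s.
Proof.
split.
  by move=> i j e; have -> : i = j by apply: ord_inj.
by move=> i; rewrite subn0 ltn_ord.
Qed.

Lemma ext1_id m (s : 'S_m) : ext1 m m s = s.
Proof. exact: is_ext_uniq (ext1_is_ext s (leqnn m)) (is_ext_self s). Qed.

Lemma oddabsN (a : int) : odd `|(- a)%R|%N = odd `|a|%N.
Proof. by rewrite abszN. Qed.

Lemma valid_small m (s : 'S_m * int) : (m <= 1)%N -> hatS_pred m s -> s = (1%g, 0%R).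
Proof.
by case: s => p d hm; rewrite /hatS_pred hm /= => /andP [/eqP -> /eqP ->].
Qed.

Lemma valid_big m (s : 'S_m * int) : (1 < m)%N -> hatS_pred m s -> odd `|s.2|%N = odd_perm s.1.
Proof. by rewrite /hatS_pred ltnNge => /negbTE -> /eqP. Qed.

Lemma valid_e2 n : hatS_pred n (e2 n).
Proof. by rewrite /e2 /hatS_pred /hunit; case: (n <= 1)%N; rewrite /= ?eqxx ?odd_perm1. Qed.

Lemma valid_hunit n : hatS_pred n (hunit n).
Proof. by rewrite /hatS_pred /hunit; case: (n <= 1)%N; rewrite /= ?eqxx ?odd_perm1. Qed.

Lemma plus2 (M : nat -> zmodType)
    (act : forall n m : nat, 'S_m * int -> M n -> M m) :
  is_FIhat_module M act -> (forall n : nat, act n n (e2 n) =1 id) ->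
  forall n m (sg : 'S_m) (d : int), (n <= m)%N -> (1 < m)%N -> hatS_pred m (sg, d) ->
  act n m (sg, (2%:Z + d)%R) =1 act n m (sg, d).
Proof.
move=> [Hadd Hwd Hid Hcomp] He n m sg d le lt hv x.
have := Hcomp n m m (sg, d) (e2 m) le (leqnn m) hv (valid_e2 m) x.
rewrite He => ->.
rewrite /hmul /i1 /e2 ltnNge in lt *; rewrite (negbTE lt) /= ext1_id mulg1.
by [].
Qed.

Lemma shiftj (M : nat -> zmodType)
    (act : forall n m : nat, 'S_m * int -> M n -> M m) :
  is_FIhat_module M act -> (forall n : nat, act n n (e2 n) =1 id) ->
  forall n m (sg : 'S_m) (d : int) (j : nat), (n <= m)%N -> (1 < m)%N -> hatS_pred m (sg, d) ->
  act n m (sg, (d + (2 * j)%N%:Z)%R) =1 act n m (sg, d).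
Proof.
move=> H He n m sg d j le lt hv; elim: j => [|j IH] x; first by rewrite muln0 addr0.
have hv' : hatS_pred m (sg, (d + (2 * j)%N%:Z)%R).
  move: hv; rewrite /hatS_pred ltnNge in lt *; rewrite (negbTE lt) /= oddabsD /=.
  by rewrite oddM /= addbF.
rewrite -IH -(plus2 H He le lt hv'); congr (act _ _ (_, _) x).
rewrite mulnS PoszD; lia.
Qed.

Lemma same_parity (M : nat -> zmodType)
    (act : forall n m : nat, 'S_m * int -> M n -> M m) :
  is_FIhat_module M act -> (forall n : nat, act n n (e2 n) =1 id) ->
  forall n m (sg : 'S_m) (d d' : int), (n <= m)%N -> (1 < m)%N ->
  hatS_pred m (sg, d) -> hatS_pred m (sg, d') ->
  act n m (sg, d) =1 act n m (sg, d').
Proof.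
move=> H He n m sg d d' le lt hv hv'.
have hN : ~~ odd `|(d' - d)%R|%N.
  rewrite oddabsD oddabsN (valid_big lt hv) (valid_big lt hv') /=.
  by case: (odd_perm sg).
have := even_halfK hN; rewrite -muln2; set j := (_./2)%N => ej.
have [e|e] : d' = (d + (2 * j)%N%:Z)%R \/ d = (d' + (2 * j)%N%:Z)%R by lia.
  by move=> x; rewrite e (shiftj H He j le lt hv).
by move=> x; rewrite e (shiftj H He j le lt hv').
Qed.

Lemma wd (M : nat -> zmodType)
    (act : forall n m : nat, 'S_m * int -> M n -> M m) :
  is_FIhat_module M act -> (forall n : nat, act n n (e2 n) =1 id) ->
  forall n m (le : (n <= m)%N) (s s' : 'S_m * int),
  hatS_pred m s -> hatS_pred m s' ->
  (forall i : 'I_n, s.1 (widen_ord le i) = s'.1 (widen_ord le i)) ->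
  act n m s =1 act n m s'.
Proof.
move=> H He n m le s s' hv hv' hs.
have HH := H; case: HH => [Hadd Hwd Hid Hcomp].
case: (leqP m 1) => hm.
  by rewrite (valid_small hm hv) (valid_small hm hv').
case: s s' hv hv' hs => sg d [sg' d'] /= hv hv' hs.
pose r := (sg' * sg^-1)%g.
have hr : forall i : 'I_m, (i < n)%N -> r i = i.
  move=> i hi; rewrite permM.
  have -> : i = widen_ord le (Ordinal hi) by apply: val_inj.
  by rewrite -hs permK.
case: (restr_ext le hr) => t ht.
have ht2 : ext2 (m - n) m t = r.
  apply: (is_ext_uniq (ext2_is_ext t (leq_subr n m))).
  by rewrite subKn.
have hsg' : (r * sg)%g = sg' by rewrite /r mulgKV.
case: (leqP (m - n) 1) => hk.
  have t1 : t = 1%g := small_perm t hk.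
  have r1 : r = 1%g.
    rewrite -ht2 t1; apply: (is_ext_uniq (ext2_is_ext _ (leq_subr n m))).
    exact: is_ext_one.
  move: hsg'; rewrite r1 mul1g => esg; subst sg'.
  exact: (same_parity H He le hm hv hv').
have vh : hatS_pred (m - n) (t, (d' - d)%R).
  rewrite /hatS_pred leqNgt hk /=.
  rewrite -(is_ext_odd _ ht); last by rewrite subnKC.
  rewrite /r odd_permM odd_permV -(valid_big hm hv) -(valid_big hm hv').
  by rewrite oddabsD oddabsN; apply/eqP.
move=> x; rewrite -(Hwd n m (sg, d) (t, (d' - d)%R) le hv vh x).
rewrite /hmul /i2 leqNgt hk /= ht2 hsg'.
by rewrite addrC subrK.
Qed.

Definition extb n m (f : {ffun 'I_n -> 'I_m}) (p : 'S_m) : bool :=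
  [forall i : 'I_n, forall j : 'I_m, (val i == val j) ==> (p j == f i)].

Definition nactD (M : nat -> zmodType)
    (act : forall n m : nat, 'S_m * int -> M n -> M m)
    (n m : nat) (f : {ffun 'I_n -> 'I_m}) (x : M n) : M m :=
  if [pick p | extb f p] is Some p then act n m (p, Posz (odd_perm p)) x else 0%R.

Lemma KL (M : nat -> zmodType)
    (act : forall n m : nat, 'S_m * int -> M n -> M m) :
  is_FIhat_module M act -> (forall n : nat, act n n (e2 n) =1 id) ->
  forall n m (le : (n <= m)%N) s, hatS_pred m s ->
  act n m s =1 nactD act (proj n m le s).
Proof.
move=> H He n m le s hv x; rewrite /nactD.
case: pickP => [p Hp | Hn].
  apply: (wd H He (le := le) hv (valid_canon p)) => i /=.
  move/forallP/(_ i)/forallP/(_ (widen_ord le i))/implyP: Hp => /(_ (eqxx _)) /eqP ->.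
  by rewrite ffunE.
have := Hn s.1; rewrite /extb; move/negP; case.
apply/forallP => i; apply/forallP => j; apply/implyP => /eqP e.
by rewrite ffunE; apply/eqP; congr (s.1 _); apply: val_inj.
Qed.

Lemma inj_repr n m (f : {ffun 'I_n -> 'I_m}) : injective f ->
  exists le : (n <= m)%N, exists s, hatS_pred m s /\ f = proj n m le s.
Proof.
move=> finj; have le : (n <= m)%N by have := @leq_card _ _ f finj; rewrite !card_ord.
exists le; case: (perm_lift_inj le finj) => p hp.
exists (p, Posz (odd_perm p)); split; first exact: valid_canon.
by apply/ffunP => i; rewrite ffunE /= hp.
Qed.

Theorem mainTheorem9 (M : nat -> zmodType)
    (act : forall n m : nat, 'S_m * int -> M n -> M m) :
  is_FIhat_module M act ->
  (factors_through_FI M act <-> (forall n : nat, act n n (e2 n) =1 id)).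
Proof.
move=> H; split.
  case=> nact [[Hadd Hid Hcomp] Hf] n x.
  rewrite (Hf n n (leqnn n) (e2 n) (valid_e2 n)).
  rewrite (_ : proj n n (leqnn n) (e2 n) = ffun_id n) ?Hid //.
  apply/ffunP => i; rewrite !ffunE; apply: val_inj.
  by rewrite /e2 /hunit; case: (n <= 1)%N; rewrite /= perm1.
move=> He; have HH := H; case: HH => [Hadd Hwd Hid Hcomp].
exists (nactD act); split; last first.
  by move=> n m le s hv; apply: KL.
split.
- move=> n m f finj x y.
  case: (inj_repr finj) => le [s [hv ->]].
  by rewrite -!(KL H He le hv) Hadd.
- move=> n x.
  rewrite (_ : ffun_id n = proj n n (leqnn n) (hunit n)).
    by rewrite -(KL H He (leqnn n) (valid_hunit n)) Hid.
  by apply/ffunP => i; rewrite !ffunE perm1; apply: val_inj.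
- move=> n m l f g finj ginj x.
  case: (inj_repr finj) => le1 [s [hs ->]].
  case: (inj_repr ginj) => le2 [t [ht ->]].
  case: s hs => [sg d] hs; case: t ht => [tg e] ht.
  rewrite -(KL H He le1 hs) -(KL H He le2 ht) Hcomp //.
  have le3 : (n <= l)%N := leq_trans le1 le2.
  have hu : hatS_pred l (hmul l (tg, e) (i1 m l (sg, d))).
    case: (leqP l 1) => hl.
      have hm : (m <= 1)%N := leq_trans le2 hl.
      rewrite (valid_small hl ht) /i1 hm /hmul /hunit /= mulg1 addr0.
      exact: valid_hunit.
    case: (leqP m 1) => hm.
      by rewrite /i1 hm /hmul /hunit /= mul1g addr0.
    rewrite /i1 leqNgt hm /hmul /= /hatS_pred leqNgt hl /= oddabsD.
    rewrite (valid_big hl ht) (valid_big hm hs) odd_permM.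
    by rewrite (is_ext_odd _ (ext1_is_ext sg le2)) // addbC.
  rewrite (KL H He le3 hu); congr (nactD act _ x).
  apply/ffunP => i; rewrite !ffunE /= permM; congr (tg _).
  case: (leqP m 1) => hm.
    rewrite /i1 hm; case: (valid_small hm hs) => -> _ /=.
    by rewrite !perm1; apply: val_inj.
  rewrite /i1 leqNgt hm /=; apply: val_inj.
  have [E1 _] := ext1_is_ext sg le2.
  by rewrite (E1 _ (widen_ord le1 i)).
Qed.
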